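(* Every finite-dimensional admissible Poisson algebra $(\mathcal{P},\cdot)$ which is not a nilalgebra contains a principal idempotent, i.e. a non-zero idempotent $e$ such that there is no non-zero idempotent $u$ with $u\cdot e=e\cdot u=0$.
   Context: $\mathbb{K}$ is a field of characteristic different from $2$ and $3$. Associator: $A(X,Y,Z)=(X\cdot Y)\cdot Z-X\cdot(Y\cdot Z)$. An admissible Poisson algebra is a $\mathbb{K}$-vector space $\mathcal{P}$ with a bilinear product $\cdot$ satisfying $3A(X,Y,Z)=(X\cdot Z)\cdot Y+(Y\cdot Z)\cdot X-(Y\cdot X)\cdot Z-(Z\cdot X)\cdot Y$ for all $X,Y,Z$. Idempotent: $e\cdot e=e$. Powers: $X^1=X$, $X^{i+1}=X\cdot X^i$; $\mathcal{P}$ is a nilalgebra if every $X$ satisfies $X^r=0$ for some $r$. *)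

(* Defs.v *)
From HB Require Import structures.
From mathcomp Require Import all_boot all_order all_algebra.
Set Implicit Arguments. Unset Strict Implicit. Unset Printing Implicit Defensive.
Import Order.TTheory GRing.Theory Num.Theory.
Local Open Scope ring_scope.

Section AdmissiblePoisson.
Variables (K : fieldType) (V : vectType K) (mul : V -> V -> V).

Definition bilinear_prod : Prop :=
  (forall (a : K) (x y z : V), mul (a *: x + y) z = a *: mul x z + mul y z) /\
  (forall (a : K) (x y z : V), mul z (a *: x + y) = a *: mul z x + mul z y).

Definition associator (x y z : V) : V := mul (mul x y) z - mul x (mul y z).

Definition admissible_poisson : Prop :=
  forall x y z : V,
    associator x y z *+ 3 =
      mul (mul x z) y + mul (mul y z) x - mul (mul y x) z - mul (mul z x) y.

(* ppow x n = X^(n+1), with X^1 = X and X^(i+1) = X . X^i *)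
Definition ppow (x : V) (n : nat) : V := iter n (mul x) x.

Definition nilalgebra : Prop := forall x : V, exists n : nat, ppow x n = 0.

Definition idempotent (e : V) : Prop := mul e e = e.

Definition principal_idempotent (e : V) : Prop :=
  e != 0 /\ idempotent e /\
  ~ (exists u : V, u != 0 /\ idempotent u /\ mul u e = 0 /\ mul e u = 0).

End AdmissiblePoisson.

(* Main.v *)
Require Import Defs.
From HB Require Import structures.
From mathcomp Require Import all_boot all_order all_algebra.
From mathcomp Require Import ring zify.
From Stdlib Require Import Classical.
Import GRing.Theory.
Local Open Scope ring_scope.

Definition phi {M : zmodType} (a : nat -> M) (p : {poly int}) : M :=
  \sum_(i < 12) a i *~ p`_i.

Lemma phiD M a p q : @phi M a (p + q) = phi a p + phi a q.
Proof. by rewrite /phi -big_split; apply: eq_bigr => i _; rewrite coefD mulrzDr. Qed.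
Lemma phiN M a p : @phi M a (- p) = - phi a p.
Proof. by rewrite /phi -sumrN; apply: eq_bigr => i _; rewrite coefN mulrNz. Qed.
Lemma phiB M a p q : @phi M a (p - q) = phi a p - phi a q.
Proof. by rewrite phiD phiN. Qed.
Lemma phiMn M a p n : @phi M a (p *+ n) = phi a p *+ n.
Proof. by rewrite /phi -sumrMnl; apply: eq_bigr => i _; rewrite coefMn -mulr_natr mulrzA mulrz_nat. Qed.
Lemma phiX M a j : (j < 12)%N -> @phi M a 'X^j = a j.
Proof.
move=> hj; rewrite /phi (bigD1 (Ordinal hj)) //= big1 ?addr0 ?coefXn ?eqxx //.
by move=> i hi; rewrite coefXn; case: eqP => // e; case/eqP: hi; apply: val_inj.
Qed.

Ltac phisimp := rewrite ?(phiD, phiB, phiN, phiMn); rewrite ?phiX //.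

Lemma lin_assoc (M : zmodType) (a : nat -> M) :
  (a 0%N - a 6%N) *+ 3 = a 1%N + a 3%N - a 2%N - a 4%N ->
  (a 1%N - a 7%N) *+ 3 = a 0%N + a 5%N - a 4%N - a 2%N ->
  (a 2%N - a 8%N) *+ 3 = a 3%N + a 1%N - a 0%N - a 5%N ->
  (a 3%N - a 9%N) *+ 3 = a 2%N + a 4%N - a 5%N - a 0%N ->
  (a 4%N - a 10%N) *+ 3 = a 5%N + a 0%N - a 1%N - a 3%N ->
  (a 5%N - a 11%N) *+ 3 = a 4%N + a 2%N - a 3%N - a 1%N ->
  (a 0%N + a 2%N + a 10%N + a 11%N - (a 6%N + a 7%N + a 3%N + a 5%N)) *+ 3 = 0 /\
  (a 6%N + a 7%N - a 3%N - a 5%N - ((a 0%N - a 2%N + a 10%N - a 11%N) + (a 8%N - a 9%N + a 1%N - a 4%N))) *+ 3 = 0.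
Proof.
move=> h0 h1 h2 h3 h4 h5.
pose P (j : nat) : {poly int} := 'X^j.
pose H0 := (P 0%N - P 6%N) *+ 3 - (P 1%N + P 3%N - P 2%N - P 4%N).
pose H1 := (P 1%N - P 7%N) *+ 3 - (P 0%N + P 5%N - P 4%N - P 2%N).
pose H2 := (P 2%N - P 8%N) *+ 3 - (P 3%N + P 1%N - P 0%N - P 5%N).
pose H3 := (P 3%N - P 9%N) *+ 3 - (P 2%N + P 4%N - P 5%N - P 0%N).
pose H4 := (P 4%N - P 10%N) *+ 3 - (P 5%N + P 0%N - P 1%N - P 3%N).
pose H5 := (P 5%N - P 11%N) *+ 3 - (P 4%N + P 2%N - P 3%N - P 1%N).
have E1 : (P 0%N + P 2%N + P 10%N + P 11%N - (P 6%N + P 7%N + P 3%N + P 5%N)) *+ 3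
           = H0 + H1 - H4 - H5 by rewrite /H0 /H1 /H4 /H5; ring.
have E2 : (P 6%N + P 7%N - P 3%N - P 5%N - ((P 0%N - P 2%N + P 10%N - P 11%N) + (P 8%N - P 9%N + P 1%N - P 4%N))) *+ 3
           = - H0 - H1 + H2 - H3 + H4 - H5 by rewrite /H0 /H1 /H2 /H3 /H4 /H5; ring.
have e0 : phi a H0 = 0 by rewrite /H0 /P; phisimp; rewrite h0 subrr.
have e1 : phi a H1 = 0 by rewrite /H1 /P; phisimp; rewrite h1 subrr.
have e2 : phi a H2 = 0 by rewrite /H2 /P; phisimp; rewrite h2 subrr.
have e3 : phi a H3 = 0 by rewrite /H3 /P; phisimp; rewrite h3 subrr.
have e4 : phi a H4 = 0 by rewrite /H4 /P; phisimp; rewrite h4 subrr.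
have e5 : phi a H5 = 0 by rewrite /H5 /P; phisimp; rewrite h5 subrr.
clearbody H0 H1 H2 H3 H4 H5.
split.
- have := congr1 (phi a) E1; rewrite ?phiD ?phiN e0 e1 e4 e5 ?oppr0 ?addr0 => <-.
  by rewrite /P; phisimp.
- have := congr1 (phi a) E2; rewrite ?phiD ?phiN e0 e1 e2 e3 e4 e5 ?oppr0 ?addr0 => <-.
  by rewrite /P; phisimp.
Qed.

Section Main.
Variables (K : fieldType) (V : vectType K) (mul : V -> V -> V).
Hypotheses (h2 : (2%:R : K) != 0) (h3 : (3%:R : K) != 0)
  (hbil : bilinear_prod mul) (hadm : admissible_poisson mul).

Lemma mulDl x y z : mul (x + y) z = mul x z + mul y z.
Proof. by have := (proj1 hbil) 1 x y z; rewrite !scale1r. Qed.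
Lemma mulDr x y z : mul z (x + y) = mul z x + mul z y.
Proof. by have := (proj2 hbil) 1 x y z; rewrite !scale1r. Qed.
Lemma mul0l z : mul 0 z = 0.
Proof.
have e := mulDl 0 0 z; rewrite addr0 in e.
by apply: (@addrI _ (mul 0 z)); rewrite addr0 -e.
Qed.
Lemma mul0r z : mul z 0 = 0.
Proof.
have e := mulDr 0 0 z; rewrite addr0 in e.
by apply: (@addrI _ (mul z 0)); rewrite addr0 -e.
Qed.
Lemma mulZl a x z : mul (a *: x) z = a *: mul x z.
Proof. by have := (proj1 hbil) a x 0 z; rewrite !addr0 mul0l addr0. Qed.
Lemma mulZr a x z : mul z (a *: x) = a *: mul z x.
Proof. by have := (proj2 hbil) a x 0 z; rewrite !addr0 mul0r addr0. Qed.
Lemma mulNl x z : mul (- x) z = - mul x z.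
Proof. by rewrite -scaleN1r mulZl scaleN1r. Qed.
Lemma mulNr x z : mul z (- x) = - mul z x.
Proof. by rewrite -scaleN1r mulZr scaleN1r. Qed.
Lemma mulBl x y z : mul (x - y) z = mul x z - mul y z.
Proof. by rewrite mulDl mulNl. Qed.
Lemma mulBr x y z : mul z (x - y) = mul z x - mul z y.
Proof. by rewrite mulDr mulNr. Qed.

Lemma cancel3 (w : V) : w *+ 3 = 0 -> w = 0.
Proof. by rewrite -scaler_nat => /eqP; rewrite scaler_eq0 (negPf h3) /= => /eqP. Qed.

Definition atoms x y z : seq V :=
  [:: mul (mul x y) z; mul (mul x z) y; mul (mul y x) z; mul (mul y z) x;
      mul (mul z x) y; mul (mul z y) x; mul x (mul y z); mul x (mul z y);
      mul y (mul x z); mul y (mul z x); mul z (mul x y); mul z (mul y x)].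

Lemma linV x y z :
  let a := fun i => nth 0 (atoms x y z) i in
  (a 0%N + a 2%N + a 10%N + a 11%N - (a 6%N + a 7%N + a 3%N + a 5%N)) *+ 3 = 0 /\
  (a 6%N + a 7%N - a 3%N - a 5%N - ((a 0%N - a 2%N + a 10%N - a 11%N) + (a 8%N - a 9%N + a 1%N - a 4%N))) *+ 3 = 0.
Proof.
move=> a; apply: (@lin_assoc V a).
- exact: hadm x y z.
- exact: hadm x z y.
- exact: hadm y x z.
- exact: hadm y z x.
- exact: hadm z x y.
- exact: hadm z y x.
Qed.

Definition o x y := 2%:R^-1 *: (mul x y + mul y x).

Lemma oC x y : o x y = o y x.
Proof. by rewrite /o addrC. Qed.

Lemma o_assoc x y z : o (o x y) z = o x (o y z).
Proof.
rewrite /o !(mulZl, mulZr, mulDl, mulDr) -!scalerDr; congr (_ *: (_ *: _)).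
have [e _] := linV x y z; by move/cancel3/subr0_eq: e => /=; rewrite !addrA.
Qed.

Definition c x y := mul x y - mul y x.

Lemma leib x y z : c x (o y z) = o (c x y) z + o y (c x z).
Proof.
rewrite /o /c !(mulZl, mulZr, mulDl, mulDr, mulNl, mulNr) -!scalerBr -!scalerDr; congr (_ *: _).
have [_ e] := linV x y z; move/cancel3/subr0_eq: e => /=.
by rewrite !opprD !addrA.
Qed.


Lemma half_dbl (v : V) : 2%:R^-1 *: (v + v) = v.
Proof. by rewrite -mulr2n -scaler_nat scalerA (mulVf h2) scale1r. Qed.

Lemma oo x : o x x = mul x x.
Proof. exact: half_dbl. Qed.

Lemma o_lin y a u v : o y (a *: u + v) = a *: o y u + o y v.
Proof.
rewrite /o !(mulZl, mulZr, mulDl, mulDr) scalerA mulrC -scalerA -scalerDr; congr (_ *: _).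
by rewrite !scalerDr !addrA; congr (_ + _); rewrite -!addrA; congr (_ + _); rewrite addrC.
Qed.

Lemma oDr y u v : o y (u + v) = o y u + o y v.
Proof. by have := o_lin y 1 u v; rewrite !scale1r. Qed.
Lemma o0r y : o y 0 = 0.
Proof. by rewrite /o mul0l mul0r addr0 scaler0. Qed.
Lemma o0l y : o 0 y = 0.
Proof. by rewrite oC o0r. Qed.
Lemma oNr y u : o y (- u) = - o y u.
Proof. by have := o_lin y (-1) u 0; rewrite o0r !addr0 !scaleN1r. Qed.
Lemma oBr y u v : o y (u - v) = o y u - o y v.
Proof. by rewrite oDr oNr. Qed.
Lemma oDl y u v : o (u + v) y = o u y + o v y.
Proof. by rewrite oC oDr oC (oC y). Qed.

Definition oL (y : V) : V -> V := o y.
Lemma oL_lin y : linear (oL y).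
Proof. by move=> a u v; rewrite /oL o_lin. Qed.
HB.instance Definition _ y := GRing.isLinear.Build K V V *:%R (oL y) (oL_lin y).
Definition Lo y : 'End(V) := linfun (oL y).
Lemma LoE y v : Lo y v = o y v.
Proof. by rewrite lfunE. Qed.

Lemma ppowS x n : ppow mul x n.+1 = mul x (ppow mul x n).
Proof. by []. Qed.

Lemma ppow_comm x n : mul x (ppow mul x n) = mul (ppow mul x n) x.
Proof.
elim: n => [//|n IH].
have h : ppow mul x n.+1 = o x (ppow mul x n) by rewrite ppowS /o -IH half_dbl.
apply/eqP; rewrite -subr_eq0; apply/eqP.
change (c x (ppow mul x n.+1) = 0).
have cxx : c x x = 0 by rewrite /c subrr.
have cxp : c x (ppow mul x n) = 0 by rewrite /c IH subrr.
by rewrite h leib cxx cxp o0l o0r addr0.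
Qed.

Lemma ppowSo x n : ppow mul x n.+1 = o x (ppow mul x n).
Proof. by rewrite ppowS /o -ppow_comm half_dbl. Qed.

Lemma ppow_add x a b : o (ppow mul x a) (ppow mul x b) = ppow mul x (a + b).+1.
Proof.
elim: a => [|a IH]; first by rewrite add0n ppowSo.
by rewrite (ppowSo x a) o_assoc IH addSn -ppowSo.
Qed.

Lemma memLo y v : reflect (exists a, v = o y a) (v \in limg (Lo y)).
Proof.
apply: (iffP memv_imgP) => [[a _ ->]|[a ->]]; first by exists a; rewrite LoE.
by exists a; rewrite ?memvf ?LoE.
Qed.

Lemma Lo_comp a b : (Lo a \o Lo b)%VF = Lo (o a b).
Proof. by apply/lfunP => v; rewrite comp_lfunE !LoE o_assoc. Qed.

Definition W x n := limg (Lo (ppow mul x n)).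

Lemma WS x n : W x n.+1 = (Lo x @: W x n)%VS.
Proof. by rewrite /W -limg_comp Lo_comp -ppowSo. Qed.

Lemma Wdec x n : (W x n.+1 <= W x n)%VS.
Proof.
rewrite /W ppowSo oC -Lo_comp limg_comp.
exact: limgS (subvf _).
Qed.

Lemma stab x : forall k n, (\dim (W x n) <= k)%N -> exists N, W x N.+1 = W x N.
Proof.
elim=> [|k IH] n hn; have le := dimvS (Wdec x n);
  (case: (eqVneq (\dim (W x n.+1)) (\dim (W x n))) => [e|ne];
   [by exists n; apply/eqP; rewrite eqEdim Wdec e leqnn|]).
- by exfalso; move: ne le hn; lia.
- by apply: (IH n.+1); move: ne le hn; lia.
Qed.

Lemma stab2 x N : W x N.+1 = W x N -> forall m, (N <= m)%N -> W x m = W x N.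
Proof.
move=> hN.
have h : forall k, W x (N + k) = W x N.
  elim=> [|k IH]; first by rewrite addn0.
  by rewrite addnS WS IH -WS hN.
by move=> m hm; rewrite -(subnKC hm) h.
Qed.

Lemma idem_exists x : (forall n, ppow mul x n != 0) -> exists e, e != 0 /\ mul e e = e.
Proof.
move=> hx.
have [N hN] := stab x (\dim (W x 0%N)) 0%N (leqnn _).
have st := @stab2 x N hN.
set WN := W x N.
set y := ppow mul x (N + N).+1.
have hy : o (ppow mul x N) (ppow mul x N) = y by rewrite ppow_add.
have Wy : limg (Lo y) = WN by apply: st; lia.
have yW : y \in WN by apply/memLo; exists (ppow mul x N).
have LyW : (Lo y @: WN)%VS = WN.
  by rewrite -{1}Wy -limg_comp Lo_comp /y ppow_add; apply: st; lia.
have ker0 : (WN :&: lker (Lo y))%VS = 0%VS.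
  apply/eqP; rewrite -dimv_eq0; have := limg_ker_dim (Lo y) WN.
  by rewrite LyW; lia.
have : y \in (Lo y @: WN)%VS by rewrite LyW.
case/memv_imgP => e eW; rewrite LoE => ye.
have eeW : o e e \in WN.
  move/memLo: (eW) => [a ea]; apply/memLo; exists (o a e).
  by rewrite {1}ea o_assoc.
have d0 : o e e - e = 0.
  apply/eqP; rewrite -memv0 -ker0 memv_cap memvB //= memv_ker LoE oBr.
  by rewrite -o_assoc -ye -[o y e]ye subrr.
exists e; split.
- apply/eqP => e0; move: (hx (N + N).+1); rewrite -/y ye e0 o0r eqxx //.
- by rewrite -(oo e); apply/subr0_eq.
Qed.


Lemma grow e u : e != 0 -> mul e e = e -> u != 0 -> mul u u = u ->
  mul u e = 0 -> mul e u = 0 ->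
  [/\ e + u != 0, mul (e + u) (e + u) = e + u &
      (\dim (limg (Lo e)) < \dim (limg (Lo (e + u))))%N].
Proof.
move=> ne0 ee nu0 uu ue eu.
have oue : o u e = 0 by rewrite /o ue eu addr0 scaler0.
have oeu : o e u = 0 by rewrite oC.
have oee : o e e = e by rewrite oo.
have ouu : o u u = u by rewrite oo.
have ff : mul (e + u) (e + u) = e + u
  by rewrite !(mulDl, mulDr) ee ue eu uu addr0 add0r.
have fne0 : e + u != 0.
  apply/eqP => f0; move: ue; rewrite (_ : u = - e); last first.
    by apply/eqP; rewrite -addr_eq0 addrC f0.
  by rewrite mulNl ee => /eqP; rewrite oppr_eq0 (negPf ne0).
have ofe : o (e + u) e = e by rewrite oDl oee oue addr0.
have ofu : o (e + u) u = u by rewrite oDl oeu ouu add0r.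
have sub : (limg (Lo e) <= limg (Lo (e + u)))%VS.
  apply/subvP => v /memLo [a ->]; apply/memLo; exists (o e a).
  by rewrite -o_assoc ofe.
have uin : u \in limg (Lo (e + u)) by apply/memLo; exists u.
have unin : u \notin limg (Lo e).
  apply/negP => /memLo [a ua]; move/eqP: nu0; apply.
  by rewrite -oeu {2}ua -o_assoc oee -ua.
split => //.
rewrite ltn_neqAle dimvS // andbT; apply/negP => /eqP ed.
have : limg (Lo e) == limg (Lo (e + u)) by rewrite eqEdim sub ed leqnn.
by move/eqP => E; move: unin; rewrite E uin.
Qed.

Lemma principal_step k : forall e, e != 0 -> mul e e = e ->
  (\dim (fullv : {vspace V}) - \dim (limg (Lo e)) <= k)%N ->
  exists e', principal_idempotent mul e'.
Proof.
elim: k => [|k IH] e ne0 ee hk;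
 (case: (classic (exists u : V, u != 0 /\ Defs.idempotent mul u /\ mul u e = 0 /\ mul e u = 0))
   => [[u [nu0 [uu [ue eu]]]]|nex]; last by exists e; split; [|split]);
 have [fne0 ff ltd] := grow e u ne0 ee nu0 uu ue eu;
 have lef := dimvS (subvf (limg (Lo (e + u)))).
- by exfalso; move: hk ltd lef; lia.
- by apply: (IH (e + u)) => //; move: hk ltd lef; lia.
Qed.

End Main.

Theorem mainTheorem9 (K : fieldType) (V : vectType K) (mul : V -> V -> V) :
  (2%:R : K) != 0 -> (3%:R : K) != 0 ->
  bilinear_prod mul -> admissible_poisson mul ->
  ~ nilalgebra mul ->
  exists e : V, principal_idempotent mul e.
Proof.
move=> h2 h3 hb ha hnil.
have [x hx] : exists x : V, forall n, ppow mul x n != 0.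
  apply: NNPP => H; apply: hnil => x.
  apply: NNPP => H2; apply: H; exists x => n; apply/eqP => E; apply: H2; by exists n.
have [e [ne ee]] := @idem_exists K V mul h2 h3 hb ha x hx.
exact: (@principal_step K V mul h2 h3 hb ha _ e ne ee (leqnn _)).
Qed.
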